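(* Let $p(X_1,\dots,X_n)$ be a regular $\{\circ,\wedge\}$-term, let $V=\{y_1,\dots,y_m\}$ be the set of vertices of $\mathbf{G}(p)$, and for each $i\in\{1,\dots,n\}$ let $T_i(p)$ be the set of pairs $(y_a,y_b)$ such that $(y_a,y_b)$ is an edge of $\mathbf{G}(p)$ labelled $X_i$. Then for every $i$, every class of the equivalence relation on $V$ generated by $T_i(p)$ has at most $2$ elements.
   Context: Graph of a $\{\wedge,\circ\}$-term $p$: start with vertices $y_1,y_2$ and one edge $(y_1,y_2)$ labelled $p$; repeatedly pick an edge $(y_j,y_k)$ whose label $w$ is not a variable; if $w=u\wedge v$ replace it by two edges $(y_j,y_k)$ labelled $u$ and $v$; if $w=u\circ v$ add a new vertex $y_t$ and replace the edge by $(y_j,y_t)$ labelled $u$ and $(y_t,y_k)$ labelled $v$. Stop when all labels are variables; the result is $\mathbf{G}(p)$. For a $\{\circ,\wedge\}$-term $p$, the sets $L_p,R_p$ of left/right variables are defined by: $L_{X}=R_X=\{X\}$ for a variable; $L_{q\circ r}=L_q$, $R_{q\circ r}=R_r$; $L_{q\wedge r}=L_q\cup L_r$, $R_{q\wedge r}=R_q\cup R_r$. Regular terms form the smallest class of $\{\circ,\wedge\}$-terms containing all variables, containing $q\circ r$ whenever $q,r$ are regular and $R_q\cap L_r=\emptyset$, and containing $q\wedge r$ whenever $q,r$ are regular, $L_q\cap L_r=\emptyset$ and $R_q\cap R_r=\emptyset$. *)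

(* Defs.v *)
From Stdlib Require Import List Arith Relations.
Import ListNotations.

Inductive term : Type :=
| Var  : nat -> term
| Comp : term -> term -> term
| Meet : term -> term -> term.

Fixpoint Lvars (p : term) : list nat :=
  match p with
  | Var x => [x]
  | Comp q _ => Lvars q
  | Meet q r => Lvars q ++ Lvars r
  end.

Fixpoint Rvars (p : term) : list nat :=
  match p with
  | Var x => [x]
  | Comp _ r => Rvars r
  | Meet q r => Rvars q ++ Rvars r
  end.

Definition disjoint (A B : list nat) : Prop :=
  forall x, In x A -> In x B -> False.

Inductive regular : term -> Prop :=
| reg_var  : forall x, regular (Var x)
| reg_comp : forall q r, regular q -> regular r ->
    disjoint (Rvars q) (Lvars r) -> regular (Comp q r)
| reg_meet : forall q r, regular q -> regular r ->
    disjoint (Lvars q) (Lvars r) -> disjoint (Rvars q) (Rvars r) ->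
    regular (Meet q r).

(** Vertices are natural numbers; [gedges p s t k]
    returns the labelled edges (source, target, variable index) obtained by
    fully decomposing an edge (s,t) labelled p, where fresh vertices are
    taken to be k, k+1, ..., together with the next unused vertex number. *)
Fixpoint gedges (p : term) (s t k : nat) : list (nat * nat * nat) * nat :=
  match p with
  | Var x => ([(s, t, x)], k)
  | Meet u v =>
      let (eu, k1) := gedges u s t k in
      let (ev, k2) := gedges v s t k1 in
      (eu ++ ev, k2)
  | Comp u v =>
      let (eu, k1) := gedges u s k (S k) in
      let (ev, k2) := gedges v k t k1 in
      (eu ++ ev, k2)
  end.

(** G(p): start with vertices y_1 = 0, y_2 = 1 and the edge (0,1) labelled p.
    The vertex set is {0, ..., nverts p - 1}. *)
Definition Gedges (p : term) : list (nat * nat * nat) := fst (gedges p 0 1 2).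
Definition nverts (p : term) : nat := snd (gedges p 0 1 2).

Definition T (i : nat) (p : term) (a b : nat) : Prop := In (a, b, i) (Gedges p).

Definition Tequiv (i : nat) (p : term) : relation nat :=
  clos_refl_sym_trans nat (T i p).

(* Main.v *)
Require Import Defs.
From Stdlib Require Import List Arith Relations Lia.
Import ListNotations.

Definition adj (E : list (nat*nat*nat)) v w x := In (v,w,x) E \/ In (w,v,x) E.

Lemma adj_app E1 E2 v w x : adj (E1 ++ E2) v w x -> adj E1 v w x \/ adj E2 v w x.
Proof. unfold adj; rewrite !in_app_iff; tauto. Qed.

Lemma gedges_inv : forall p, regular p -> forall s t k E k',
  s < k -> t < k -> s <> t -> gedges p s t k = (E,k') ->
  k <= k' /\
  (forall a b x, In (a,b,x) E -> (a = s \/ k <= a < k') /\ (b = t \/ k <= b < k')) /\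
  (forall b x, In (s,b,x) E -> In x (Lvars p)) /\
  (forall a x, In (a,t,x) E -> In x (Rvars p)) /\
  (forall v w1 w2 x, adj E v w1 x -> adj E v w2 x -> w1 = w2).
Proof.
  induction 1 as [x|q r Hq IHq Hr IHr Hd|q r Hq IHq Hr IHr Hd1 Hd2];
    intros s t k E k' Hs Ht Hst Hg; simpl in Hg.
  - injection Hg as <- <-. split; [lia|]. split.
    { intros a b y [H|[]]. injection H as -> -> ->. lia. }
    split. { intros b y [H|[]]. injection H as -> ->. simpl; auto. }
    split. { intros b y [H|[]]. injection H as -> ->. simpl; auto. }
    intros v w1 w2 y [H1|H1] [H2|H2]; simpl in H1, H2;
      destruct H1 as [H1|[]]; destruct H2 as [H2|[]];
      injection H1; injection H2; intros; subst; congruence.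
  - destruct (gedges q s k (S k)) as [Eu k1] eqn:Eq.
    destruct (gedges r k t k1) as [Ev k2] eqn:Er.
    injection Hg as <- <-.
    destruct (IHq s k (S k) Eu k1 ltac:(lia) ltac:(lia) ltac:(lia) Eq)
      as (Lu & Vu & Lsu & Rsu & Uu).
    destruct (IHr k t k1 Ev k2 ltac:(lia) ltac:(lia) ltac:(lia) Er)
      as (Lv & Vv & Lsv & Rsv & Uv).
    split; [lia|]. split.
    { intros a b y H. apply in_app_iff in H as [H|H];
        [apply Vu in H|apply Vv in H]; lia. }
    split.
    { intros b y H. apply in_app_iff in H as [H|H].
      - simpl. eapply Lsu; eauto.
      - apply Vv in H. lia. }
    split.
    { intros b y H. apply in_app_iff in H as [H|H].
      - apply Vu in H. lia.
      - simpl. eapply Rsv; eauto. }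
    intros v w1 w2 y H1 H2.
    assert (Hmix : forall w1 w2, adj Eu v w1 y -> adj Ev v w2 y -> False).
    { clear w1 w2 H1 H2. intros w1 w2 [A|A] [B|B].
      - apply Vu in A as VA. apply Vv in B as VB. lia.
      - apply Vu in A as VA. apply Vv in B as VB. lia.
      - apply Vu in A as VA. apply Vv in B as VB.
        assert (v = k) by lia. subst v.
        apply (Hd y); [eapply Rsu; eauto | eapply Lsv; eauto].
      - apply Vv in B as VB. apply Vu in A as VA. lia. }
    apply adj_app in H1 as [H1|H1]; apply adj_app in H2 as [H2|H2].
    + eauto.
    + exfalso; eauto.
    + exfalso; eauto.
    + eauto.
  - destruct (gedges q s t k) as [Eu k1] eqn:Eq.
    destruct (gedges r s t k1) as [Ev k2] eqn:Er.
    injection Hg as <- <-.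
    destruct (IHq s t k Eu k1 ltac:(lia) ltac:(lia) ltac:(lia) Eq)
      as (Lu & Vu & Lsu & Rsu & Uu).
    destruct (IHr s t k1 Ev k2 ltac:(lia) ltac:(lia) ltac:(lia) Er)
      as (Lv & Vv & Lsv & Rsv & Uv).
    split; [lia|]. split.
    { intros a b y H. apply in_app_iff in H as [H|H];
        [apply Vu in H|apply Vv in H]; lia. }
    split.
    { intros b y H. simpl. apply in_app_iff. apply in_app_iff in H as [H|H];
        [left; eapply Lsu|right; eapply Lsv]; eauto. }
    split.
    { intros b y H. simpl. apply in_app_iff. apply in_app_iff in H as [H|H];
        [left; eapply Rsu|right; eapply Rsv]; eauto. }
    intros v w1 w2 y H1 H2.
    assert (Hmix : forall w1 w2, adj Eu v w1 y -> adj Ev v w2 y -> False).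
    { clear w1 w2 H1 H2. intros w1 w2 [A|A] [B|B].
      - apply Vu in A as VA. apply Vv in B as VB.
        assert (v = s) by lia. subst v.
        apply (Hd1 y); [eapply Lsu; eauto | eapply Lsv; eauto].
      - apply Vu in A as VA. apply Vv in B as VB. lia.
      - apply Vu in A as VA. apply Vv in B as VB. lia.
      - apply Vu in A as VA. apply Vv in B as VB.
        assert (v = t) by lia. subst v.
        apply (Hd2 y); [eapply Rsu; eauto | eapply Rsv; eauto]. }
    apply adj_app in H1 as [H1|H1]; apply adj_app in H2 as [H2|H2].
    + eauto.
    + exfalso; eauto.
    + exfalso; eauto.
    + eauto.
Qed.

Theorem lemma4p3 : forall (p : term), regular p ->
  forall (i a : nat), a < nverts p ->
  forall b c d : nat,
    b < nverts p -> c < nverts p -> d < nverts p ->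
    Tequiv i p a b -> Tequiv i p a c -> Tequiv i p a d ->
    b = c \/ b = d \/ c = d.
Proof.
  intros p Hp i a _ b c d _ _ _ Hb Hc Hd.
  destruct (gedges p 0 1 2) as [E k'] eqn:Hg.
  destruct (gedges_inv p Hp 0 1 2 E k' ltac:(lia) ltac:(lia) ltac:(lia) Hg)
    as (_ & _ & _ & _ & U).
  assert (HE : Gedges p = E) by (unfold Gedges; rewrite Hg; reflexivity).
  set (R := fun u v => u = v \/ adj E u v i).
  assert (HR : forall u v, Tequiv i p u v -> R u v).
  { intros u v H. induction H as [u v H|u|u v H IH|u v w H1 IH1 H2 IH2].
    - right. left. unfold T in H. rewrite HE in H. exact H.
    - left; reflexivity.
    - destruct IH as [->|[A|A]]; [left; reflexivity|right; right; exact A|right; left; exact A].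
    - destruct IH1 as [->|A]; [exact IH2|].
      destruct IH2 as [->|B]; [right; exact A|].
      left. assert (A' : adj E v u i) by (destruct A; [right|left]; assumption).
      eapply U; [exact A'|exact B]. }
  apply HR in Hb, Hc, Hd.
  destruct Hb as [<-|Hb]; destruct Hc as [<-|Hc]; destruct Hd as [<-|Hd]; auto.
  - right; right. eapply U; eauto.
  - right; left. eapply U; eauto.
  - left. eapply U; eauto.
  - left. eapply U; eauto.
Qed.
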